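(* Let $k$ be a positive integer and let $G$ be a $3$-graph with $\lambda(G)>\lambda(K_{k+1}^3)$, and let $\vec x$ be an optimal weight vector of $G$. Then every vertex $v\in V(G)$ whose link graph satisfies $\omega(G_v)\leq k$ has weight $x_v<\frac{1}{k+1}$.
   Context: For a $3$-graph $G$ on vertex set $[n]$ and $\vec x\in\Delta=\{\vec x\in[0,1]^n:\sum_i x_i=1\}$, put $\lambda(G,\vec x)=\sum_{e\in E(G)}\prod_{i\in e}x_i$ and $\lambda(G)=\max_{\vec x\in\Delta}\lambda(G,\vec x)$ (the Lagrangian). A vector $\vec x\in\Delta$ with $\lambda(G,\vec x)=\lambda(G)$ is an optimal weight vector, and $x_v$ is the weight of vertex $v$. The link graph of $v$ is the $2$-graph $G_v=\{ab: vab\in E(G)\}$, and $\omega(\cdot)$ denotes the order of a maximum clique of a $2$-graph. $K_m^3$ is the complete $3$-graph on $m$ vertices. *)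

(* Defs.v *)
From mathcomp Require Import all_boot all_order all_algebra.
From mathcomp Require Import classical_sets reals.
Set Implicit Arguments. Unset Strict Implicit. Unset Printing Implicit Defensive.
Import Order.TTheory GRing.Theory Num.Theory.
Local Open Scope ring_scope.
Local Open Scope classical_set_scope.

Definition is_3graph (n : nat) (G : {set {set 'I_n}}) : Prop :=
  forall e, e \in G -> #|e| = 3%N.

Definition in_simplex (R : realType) (n : nat) (x : 'I_n -> R) : Prop :=
  (forall i, 0 <= x i <= 1) /\ \sum_(i < n) x i = 1.

Definition lagr_at (R : realType) (n : nat) (G : {set {set 'I_n}})
  (x : 'I_n -> R) : R :=
  \sum_(e in G) \prod_(i in e) x i.

(* lambda(G) = max over the simplex (taken as the supremum, which is attained). *)
Definition lagrangian (R : realType) (n : nat) (G : {set {set 'I_n}}) : R :=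
  sup [set lagr_at G x | x in [set x : 'I_n -> R | in_simplex x]].

Definition optimal_weight (R : realType) (n : nat) (G : {set {set 'I_n}})
  (x : 'I_n -> R) : Prop :=
  in_simplex x /\ lagr_at G x = lagrangian R G.

Definition complete3 (m : nat) : {set {set 'I_m}} :=
  [set e : {set 'I_m} | #|e| == 3%N]%SET.

(* S is a clique of the link graph G_v = {ab : vab in E(G)} *)
Definition link_clique (n : nat) (G : {set {set 'I_n}}) (v : 'I_n)
  (S : {set 'I_n}) : Prop :=
  forall a b, a \in S -> b \in S -> a != b -> ((v |: (a |: [set b])) \in G)%SET.

Definition link_clique_num_le (n : nat) (G : {set {set 'I_n}}) (v : 'I_n)
  (k : nat) : Prop :=
  forall S, link_clique G v S -> (#|S| <= k)%N.

(* Main.v *)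
Require Import Defs.
From mathcomp Require Import all_boot all_order all_algebra.
From mathcomp Require Import classical_sets reals.
From mathcomp Require Import ring lra.
Import Order.TTheory GRing.Theory Num.Theory.
Local Open Scope ring_scope.

Section Gen.
Variable R : realFieldType.

Lemma CS n (P : {set 'I_n}) (f : 'I_n -> R) :
  (\sum_(i in P) f i)^+2 <= #|P|%:R * \sum_(i in P) f i ^+2.
Proof.
have H : 0 <= \sum_(i in P) \sum_(j in P) (f i - f j)^+2.
  by apply: sumr_ge0 => i _; apply: sumr_ge0 => j _; apply: sqr_ge0.
have Ea : \sum_(i in P) \sum_(j in P) f i ^+ 2 = #|P|%:R * \sum_(i in P) f i ^+2.
  by rewrite mulr_sumr; apply: eq_bigr => i _; rewrite sumr_const mulr_natl.
have Eb : \sum_(i in P) \sum_(j in P) f j ^+ 2 = #|P|%:R * \sum_(i in P) f i ^+2.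
  by rewrite sumr_const mulr_natl.
have Ec : \sum_(i in P) \sum_(j in P) (f i * f j) = (\sum_(i in P) f i)^+2.
  by rewrite expr2 mulr_suml; apply: eq_bigr => i _; rewrite mulr_sumr.
have E : \sum_(i in P) \sum_(j in P) (f i - f j)^+2 =
  \sum_(i in P) \sum_(j in P) f i ^+ 2 + \sum_(i in P) \sum_(j in P) f j ^+ 2
  - (\sum_(i in P) \sum_(j in P) (f i * f j)) *+ 2.
  rewrite -sumrMnl -sumrN -!big_split /=; apply: eq_bigr => i _.
  rewrite -sumrMnl -sumrN -!big_split /=; apply: eq_bigr => j _.
  by rewrite sqrrB; ring.
move: H; rewrite E Ea Eb Ec => H; lra.
Qed.

Variable n : nat.
Implicit Types (adj : rel 'I_n) (y : 'I_n -> R).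

Definition Qf adj y := \sum_a \sum_(b | adj a b) y a * y b.
Definition supp y := [set i | y i != 0].
Definition dv (a b : 'I_n) : 'I_n -> R := fun i => (i == a)%:R - (i == b)%:R.

Lemma sum_ind (f : 'I_n -> R) c : \sum_i (i == c)%:R * f i = f c.
Proof.
rewrite (bigD1 c) //= eqxx mul1r big1 ?addr0 // => i /negbTE ->; by rewrite mul0r.
Qed.

Lemma sum_indP (P : pred 'I_n) c : \sum_(j | P j) (j == c)%:R = (P c)%:R :> R.
Proof.
rewrite big_mkcond (bigD1 c) //= eqxx big1 ?addr0 //; first by case: (P c).
by move=> i /negbTE ->; case: (P i).
Qed.

Lemma Q_le adj y : irreflexive adj -> (forall i, 0 <= y i) ->
  Qf adj y <= (\sum_i y i)^+2 - \sum_i y i ^+2.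
Proof.
move=> irr y0.
have E : (\sum_i y i)^+2 - \sum_i y i ^+2 = \sum_a \sum_(b | b != a) y a * y b.
  rewrite expr2 mulr_suml -sumrB; apply: eq_bigr => a _.
  by rewrite mulr_sumr (bigD1 a) //= expr2 addrC addrK.
rewrite E; apply: ler_sum => a _.
rewrite [X in _ <= X]big_mkcond [X in X <= _]big_mkcond; apply: ler_sum => b _.
case: ifP => h; last by case: ifP => _ //; apply: mulr_ge0.
have -> : b != a by apply/eqP => e; move: h; rewrite e irr.
by [].
Qed.

Lemma Q_lin adj y t a b : irreflexive adj -> ~~ adj a b -> ~~ adj b a ->
  Qf adj (fun i => y i + t * dv a b i) =
  Qf adj y + t * \sum_i \sum_(j | adj i j) (y i * dv a b j + dv a b i * y j).
Proof.
move=> irr nab nba.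
have Z : \sum_i \sum_(j | adj i j) (dv a b i * dv a b j) = 0.
  under eq_bigr => i _ do rewrite -mulr_sumr /dv sumrB !sum_indP.
  rewrite /dv.
  under eq_bigr => i _ do rewrite mulrBl.
  rewrite sumrB !sum_ind !irr (negbTE nab) (negbTE nba); ring.
rewrite /Qf mulr_sumr -big_split /=.
have -> : \sum_i \sum_(j | adj i j) (y i + t * dv a b i) * (y j + t * dv a b j)
  = \sum_i (\sum_(j | adj i j) y i * y j + t * \sum_(j | adj i j) (y i * dv a b j + dv a b i * y j))
    + t^+2 * \sum_i \sum_(j | adj i j) (dv a b i * dv a b j).
  rewrite mulr_sumr -big_split /=; apply: eq_bigr => i _.
  rewrite !mulr_sumr -!big_split /=; apply: eq_bigr => j _; ring.
by rewrite Z mulr0 addr0.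
Qed.

Lemma dv_sum a b : \sum_i dv a b i = 0.
Proof.
rewrite /dv sumrB.
have h (c : 'I_n) : \sum_i (i == c)%:R = 1 :> R.
  by rewrite (bigD1 c) //= eqxx big1 ?addr0 // => i /negbTE ->.
by rewrite !h subrr.
Qed.

Lemma supp_shift y t a b c : a \in supp y -> b \in supp y -> c \in supp y ->
  y c + t * dv a b c = 0 ->
  (#|supp (fun i => (y i + t * dv a b i)%R)| < #|supp y|)%N.
Proof.
move=> ha hb hc h0.
have sub : supp (fun i => y i + t * dv a b i) \subset supp y :\ c.
  apply/fintype.subsetP => i; rewrite !inE => hi.
  have -> : i != c by apply/eqP => e; move: hi; rewrite e h0 eqxx.
  case: (boolP (i == a)) => [/eqP -> | nia]; first by rewrite inE in ha.
  case: (boolP (i == b)) => [/eqP -> | nib]; first by rewrite inE in hb.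
  by move: hi; rewrite /dv (negbTE nia) (negbTE nib) subrr mulr0 addr0.
apply: (leq_ltn_trans (subset_leq_card sub)).
by rewrite [X in (_ < X)%N](cardsD1 c) hc.
Qed.

Lemma reduce adj y a b : irreflexive adj -> (forall i, 0 <= y i) ->
  a != b -> a \in supp y -> b \in supp y -> ~~ adj a b -> ~~ adj b a ->
  exists y', [/\ forall i, 0 <= y' i, \sum_i y' i = \sum_i y i,
     Qf adj y <= Qf adj y' & (#|supp y'| < #|supp y|)%N].
Proof.
move=> irr y0 nab ha hb h1 h2.
have da : dv a b a = 1 by rewrite /dv eqxx (negbTE nab) subr0.
have db : dv a b b = -1 by rewrite /dv eqxx eq_sym (negbTE nab) sub0r.
have dz i : i != a -> i != b -> dv a b i = 0.
  by rewrite /dv => /negbTE -> /negbTE ->; rewrite subrr.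
have sm t : \sum_i (y i + t * dv a b i) = \sum_i y i.
  by rewrite big_split /= -mulr_sumr dv_sum mulr0 addr0.
have nn t : 0 <= y a + t -> 0 <= y b - t -> forall i, 0 <= y i + t * dv a b i.
  move=> h3 h4 i.
  case: (boolP (i == a)) => [/eqP -> | nia]; first by rewrite da mulr1.
  case: (boolP (i == b)) => [/eqP -> | nib]; first by rewrite db mulrN1.
  by rewrite dz // mulr0 addr0.
set D := \sum_i \sum_(j | adj i j) (y i * dv a b j + dv a b i * y j).
have ya := y0 a; have yb := y0 b.
case: (lerP 0 D) => hD.
  exists (fun i => y i + y b * dv a b i); split.
  - by apply: nn; lra.
  - by apply: sm.
  - rewrite Q_lin //; rewrite -/D; have := mulr_ge0 yb hD; lra.
  - by apply: (@supp_shift _ _ _ _ b) => //; rewrite db; ring.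
exists (fun i => y i + (- y a) * dv a b i); split.
- by apply: nn; lra.
- by apply: sm.
- rewrite Q_lin //; rewrite -/D; nra.
- by apply: (@supp_shift _ _ _ _ a) => //; rewrite da; ring.
Qed.

Lemma sum_supp (f : R -> R) y : f 0 = 0 ->
  \sum_i f (y i) = \sum_(i in supp y) f (y i).
Proof.
move=> f0; rewrite (bigID (fun i => i \in supp y)) /= [X in _ + X]big1 ?addr0 //.
by move=> i; rewrite inE negbK => /eqP ->.
Qed.

Lemma MS adj (k : nat) : (0 < k)%N -> irreflexive adj -> symmetric adj ->
  (forall S : {set 'I_n}, (forall a b, a \in S -> b \in S -> a != b -> adj a b) ->
     (#|S| <= k)%N) ->
  forall y, (forall i, 0 <= y i) ->
  Qf adj y * k%:R <= (k%:R - 1) * (\sum_i y i)^+2.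
Proof.
move=> k0 irr sym cl.
suff H : forall N y, (#|supp y| <= N)%N -> (forall i, 0 <= y i) ->
  Qf adj y * k%:R <= (k%:R - 1) * (\sum_i y i)^+2.
  by move=> y; apply: (H _ y (leqnn _)).
elim=> [|N IH] y hN y0;
  case: (boolP [forall a, forall b,
     (a \in supp y) ==> (b \in supp y) ==> (a != b) ==> adj a b]) => hc.
- have hm : (#|supp y| <= k)%N.
    apply: cl => a b ha hb nab.
    by move/forallP: hc => /(_ a) /forallP /(_ b); rewrite ha hb nab.
  have hQ := @Q_le adj y irr y0.
  have hS : \sum_i y i = \sum_(i in supp y) y i by apply: (sum_supp (fun x => x)).
  have hT : \sum_i y i ^+ 2 = \sum_(i in supp y) y i ^+2
    by apply: (sum_supp (fun x => x ^+ 2)); rewrite expr0n.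
  have hC := @CS n (supp y) y.
  have hk : #|supp y|%:R <= k%:R :> R by rewrite ler_nat.
  have hT0 : 0 <= \sum_(i in supp y) y i ^+2 by apply: sumr_ge0 => i _; apply: sqr_ge0.
  have hk0 : 0 <= k%:R :> R by [].
  rewrite hS hT in hQ; rewrite hS.
  have := ler_wpM2r hk0 hQ.
  have := ler_wpM2r hT0 hk.
  nra.
- by move: hN; rewrite leqn0 => /eqP/cards0_eq h; exfalso; move: hc;
     apply/negP; apply/negPn/forallP => a; apply/forallP => b; rewrite h inE.
-
  have hm : (#|supp y| <= k)%N.
    apply: cl => a b ha hb nab.
    by move/forallP: hc => /(_ a) /forallP /(_ b); rewrite ha hb nab.
  have hQ := @Q_le adj y irr y0.
  have hS : \sum_i y i = \sum_(i in supp y) y i by apply: (sum_supp (fun x => x)).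
  have hT : \sum_i y i ^+ 2 = \sum_(i in supp y) y i ^+2
    by apply: (sum_supp (fun x => x ^+ 2)); rewrite expr0n.
  have hC := @CS n (supp y) y.
  have hk : #|supp y|%:R <= k%:R :> R by rewrite ler_nat.
  have hT0 : 0 <= \sum_(i in supp y) y i ^+2 by apply: sumr_ge0 => i _; apply: sqr_ge0.
  have hk0 : 0 <= k%:R :> R by [].
  rewrite hS hT in hQ; rewrite hS.
  have := ler_wpM2r hk0 hQ.
  have := ler_wpM2r hT0 hk.
  nra.
- move/forallPn: hc => [a] /forallPn [b]; rewrite !negb_imply => /and4P [ha hb nab nadj].
  have nadj' : ~~ adj b a by rewrite sym.
  have [y' [y'0 sy' Qy' cy']] := @reduce adj y a b irr y0 nab ha hb nadj nadj'.
  have := IH y' (leq_trans cy' hN) y'0.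
  rewrite sy'; apply: le_trans; apply: ler_wpM2r => //.
Qed.
End Gen.

Section Three.
Variable R : realFieldType.
Variable n : nat.
Variable G : {set {set 'I_n}}.
Variable v : 'I_n.
Implicit Types (w x : 'I_n -> R).

Definition adjv : rel 'I_n := fun a b => (a != b) && ((v |: (a |: [set b])) \in G).
Definition Lv w := \sum_(e in G | v \in e) \prod_(i in e :\ v) w i.
Definition Mv w := \sum_(e in G | v \notin e) \prod_(i in e) w i.

Lemma cond_eq (e : {set 'I_n}) c d a b : v \in e -> #|e| = 3%N -> c != d ->
  e :\ v = [set c; d] ->
  ((a != b) && (e == v |: (a |: [set b]))) =
  ((a == c) && (b == d)) || ((a == d) && (b == c)).
Proof.
move=> ve e3 ncd ed.
have ee : e = v |: [set c; d] by rewrite -ed finset.setD1K.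
apply/idP/idP.
- case/andP=> nab /eqP E.
  have vn : v \notin [set a; b].
    apply/negP => vin; move: e3; rewrite E cardsU1 vin cards2 nab /=; by [].
  have E2 : [set a; b] = [set c; d] by rewrite -ed E setU1K.
  have ha : a \in [set c; d] by rewrite -E2 set21.
  have hb : b \in [set c; d] by rewrite -E2 set22.
  rewrite !in_set2 in ha hb.
  case/orP: ha => /eqP ea; subst a.
  + case/orP: hb => /eqP eb; subst b; first by rewrite eqxx in nab.
    by rewrite !eqxx.
  + case/orP: hb => /eqP eb; subst b; last by rewrite eqxx in nab.
    by rewrite !eqxx orbT.
- case/orP => /andP [/eqP -> /eqP ->].
  + by rewrite ncd ee eqxx.
  + rewrite eq_sym ncd ee /=; apply/eqP; congr (_ |: _); exact: finset.setUC.
Qed.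

Lemma conv w : (forall e, e \in G -> #|e| = 3%N) -> @Qf R n adjv w = Lv w *+ 2.
Proof.
move=> G3.
have S1 a b : (if adjv a b then w a * w b else 0) =
  \sum_(e in G | v \in e) (if (a != b) && (e == v |: (a |: [set b])) then w a * w b else 0).
  case: (boolP (adjv a b)) => /= h.
  - case/andP: h => nab EG.
    rewrite (bigD1 (v |: (a |: [set b]))) /=; last by rewrite EG setU11.
    rewrite nab eqxx big1 ?addr0 // => e /andP [_ ne]; by rewrite (negbTE ne) andbF.
  - rewrite big1 // => e /andP [eG _]; case: ifP => // /andP [nab /eqP E].
    by move: h; rewrite /adjv nab -E eG.
rewrite /Qf.
under eq_bigr => a _ do rewrite big_mkcond /=.
under eq_bigr => a _ do under eq_bigr => b _ do rewrite S1.
under eq_bigr => a _ do rewrite exchange_big /=.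
rewrite exchange_big /= /Lv -sumrMnl; apply: eq_bigr => e /andP [eG ve].
have : #|e :\ v| == 2%N.
  by have h := cardsD1 v e; rewrite (G3 e eG) ve add1n in h; case: h => <-.
case/cards2P => c [d [ncd ed]].
under eq_bigr => a _ do under eq_bigr => b _ do rewrite (@cond_eq e c d a b ve (G3 _ eG) ncd ed).
rewrite ed big_setU1 /=; last by rewrite inE.
rewrite big_set1.
rewrite (bigD1 c) //= [X in _ + X](bigD1 d) /=; last by rewrite eq_sym.
rewrite [X in _ + (_ + X)]big1 ?addr0; last first.
  move=> a /andP [nac nad]; apply: big1 => b _.
  by rewrite (negbTE nac) (negbTE nad).
have E1 : \sum_b (if (c == c) && (b == d) || (c == d) && (b == c) then w c * w b else 0) = w c * w d.
  rewrite eqxx (negbTE ncd) /=; under eq_bigr => b _ do rewrite orbF; rewrite -big_mkcond /=; exact: big_pred1_eq.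
have E2 : \sum_b (if (d == c) && (b == d) || (d == d) && (b == c) then w d * w b else 0) = w c * w d.
  rewrite eqxx eq_sym (negbTE ncd) /= -big_mkcond /= big_pred1_eq; exact: mulrC.
by rewrite E1 E2.
Qed.

Lemma lagr_split w : \sum_(e in G) \prod_(i in e) w i = w v * Lv w + Mv w.
Proof.
rewrite (bigID (fun e : {set 'I_n} => v \in e)) /= /Lv /Mv mulr_sumr; congr (_ + _).
apply: eq_bigr => e /andP [_ ve]; rewrite (bigD1 v) //=; congr (_ * _).
by apply: eq_bigl => i; rewrite in_setD1 andbC.
Qed.

Lemma Lv_scale w x r : (forall e, e \in G -> #|e| = 3%N) ->
  (forall i, i != v -> w i = r * x i) -> Lv w = r ^+ 2 * Lv x.
Proof.
move=> G3 hw; rewrite /Lv mulr_sumr; apply: eq_bigr => e /andP [eG ve].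
rewrite (eq_bigr (fun i => r * x i)); last by move=> i; rewrite in_setD1 => /andP [iv _]; apply: hw.
rewrite big_split /= prodr_const; congr (_ ^+ _ * _).
by have h := cardsD1 v e; rewrite (G3 e eG) ve add1n in h; case: h.
Qed.

Lemma Mv_scale w x r : (forall e, e \in G -> #|e| = 3%N) ->
  (forall i, i != v -> w i = r * x i) -> Mv w = r ^+ 3 * Mv x.
Proof.
move=> G3 hw; rewrite /Mv mulr_sumr; apply: eq_bigr => e /andP [eG ve].
rewrite (eq_bigr (fun i => r * x i)); last first.
  by move=> i ie; apply: hw; apply/eqP => iv; move: ve; rewrite -iv ie.
by rewrite big_split /= prodr_const G3.
Qed.
End Three.
Arguments adjv {n} G v _ _.
Arguments Lv {R n} G v w.
Arguments Mv {R n} G v w.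
Arguments lagr_split {R n} G v w.
Arguments Lv_scale {R n G v w x r}.
Arguments Mv_scale {R n G v w x r}.
Arguments conv {R n G v} w.
Arguments MS {R n adj k}.
Arguments Qf {R n}.

Lemma deriv_arith (R : realFieldType) (L C s : R) : 0 <= L -> 0 < 2*L + 3*C -> 0 < s -> s <= 1 ->
  exists eps : R, [/\ 0 < eps, eps <= s &
     0 < eps * (2*L+3*C) + eps^+2 * (L + 3*C) + eps^+3 * C].
Proof.
move=> L0 D0 s0 s1.
set D := 2*L + 3*C in D0 *.
set K := L + 4 * `|C| + 1.
have a0 : 0 <= `|C| by [].
have a1 : C <= `|C| by apply: ler_norm.
have a2 : - `|C| <= C by rewrite lerNl -normrN ler_norm.
have K0 : 0 < K by rewrite /K; lra.
set q := D / (2 * K).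
have q2 : q * (2 * K) = D by rewrite /q mulfVK // mulf_neq0 // gt_eqF.
have q0 : 0 < q by rewrite /q divr_gt0 // mulr_gt0.
have q1 : q <= 1.
  have : D <= 2 * K by rewrite /D /K; lra.
  by rewrite -q2 -{2}(mul1r (2 * K)) ler_pM2r ?mulr_gt0.
exists (s * q); split.
- by apply: mulr_gt0.
- by rewrite -{2}(mulr1 s) ler_pM2l.
set e := s * q.
have e0 : 0 < e by apply: mulr_gt0.
have eq : e <= q by rewrite /e -{2}(mul1r q) ler_pM2r.
have e1 : e <= 1 by lra.
have h1 : 0 <= e * L by apply: mulr_ge0; lra.
have h2 : e * (- `|C|) <= e * C by apply: ler_wpM2l => //; lra.
have h3 : e^+2 * (- `|C|) <= e^+2 * C by apply: ler_wpM2l => //; apply: sqr_ge0.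
have h4 : e^+2 * `|C| <= e * `|C| by apply: ler_wpM2r => //; rewrite expr2; have := ler_wpM2l (ltW e0) e1; rewrite mulr1.
have h5 : e * K <= q * K by apply: ler_wpM2r; lra.
have E : e * D + e^+2 * (L + 3*C) + e^+3 * C = e * (D + e * L + 3 * (e * C) + e^+2 * C).
  by ring.
rewrite E; apply: mulr_gt0 => //.
have : e * (L + 4 * `|C| + 1) <= D / 2 by rewrite -/K; lra.
move=> h6.
have h7 : e * L + 4 * (e * `|C|) <= D / 2 by move: h6; rewrite !mulrDr; lra.
lra.
Qed.

Lemma final_arith (R : realFieldType) (L M s lamK k : R) :
  1 <= k -> 0 <= L -> 2 * L + 3 * (M - (1 - s) * L) <= 0 ->
  L * 2 * k <= (k - 1) * (1 - s)^+2 ->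
  (k + 1) * (1 - s) <= k -> 0 <= 1 - s ->
  k * (k - 1) <= lamK * 6 * (k + 1)^+2 -> lamK < s * L + M -> False.
Proof.
move=> k1 L0 hd hms hs s1 hK hlt.
set lam := s * L + M in hlt.
have h1 : 6 * lam <= 2 * L by rewrite /lam; lra.
have h2 : ((k + 1) * (1 - s))^+2 <= k^+2.
  have p0 : 0 <= (k + 1) * (1 - s) by apply: mulr_ge0; lra.
  by rewrite !expr2; apply: ler_pM.
have kp : 0 < k by lra.
have k1p : 0 < (k+1)^+2 by apply: exprn_gt0; lra.
have h3 : 6 * lam * k * (k+1)^+2 <= 2 * L * k * (k+1)^+2.
  by apply: ler_wpM2r; [lra|]; apply: ler_wpM2r; lra.
have h4 : 2 * L * k * (k+1)^+2 <= (k - 1) * (1 - s)^+2 * (k+1)^+2.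
  by apply: ler_wpM2r; lra.
have h5 : (k - 1) * (1 - s)^+2 * (k+1)^+2 <= (k - 1) * k^+2.
  have h2b : (1 - s)^+2 * (k+1)^+2 <= k^+2 by rewrite -exprMn mulrC.
  rewrite -mulrA; apply: ler_wpM2l => //; lra.
have h6 : lam * 6 * (k + 1)^+2 * k <= k * (k - 1) * k.
  have -> : k * (k - 1) * k = (k - 1) * k^+2 by ring.
  have -> : lam * 6 * (k + 1)^+2 * k = 6 * lam * k * (k+1)^+2 by ring.
  lra.
have h7 : lam * 6 * (k + 1)^+2 <= k * (k - 1) by rewrite -(ler_pM2r kp).
have h8 : lamK * 6 * (k + 1)^+2 < lam * 6 * (k + 1)^+2.
  by rewrite ltr_pM2r // ltr_pM2r.
lra.
Qed.

Lemma binom3 k : ('C(k.+2, 3) * 6 = k.+2 * k.+1 * k)%N.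
Proof.
have := bin_ffact k.+2 3; rewrite [3`!]/= => ->.
by rewrite !ffactnS /= ffactn0 !muln1 mulnA.
Qed.

Lemma binom3R (R : realFieldType) k : (0 < k)%N ->
  ('C(k.+1, 3))%:R * 6 = (k.+1)%:R * k%:R * (k%:R - 1) :> R.
Proof.
case: k => // k _.
by rewrite -natrM binom3 !natrM -!natr1 ; ring.
Qed.

Lemma lagr_ub (R : realType) m (H : {set {set 'I_m}}) (y : 'I_m -> R) :
  in_simplex y -> lagr_at H y <= #|H|%:R.
Proof.
move=> [y01 _]; rewrite /lagr_at -sumr_const; apply: ler_sum => e _.
apply: (@le_trans _ _ (\prod_(i in e) (1:R))); last by rewrite big1_eq.
apply: ler_prod => i _.
by have := y01 i.
Qed.

Lemma lagr_le (R : realType) m (H : {set {set 'I_m}}) (y : 'I_m -> R) :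
  in_simplex y -> lagr_at H y <= lagrangian R H.
Proof.
move=> ys; rewrite /lagrangian.
apply: ub_le_sup; last by exists y.
by exists #|H|%:R => z [w ws <-]; apply: lagr_ub.
Qed.

Theorem claim3p2 (R : realType) (k n : nat) (G : {set {set 'I_n}})
  (x : 'I_n -> R) :
  (0 < k)%N ->
  is_3graph G ->
  lagrangian R (complete3 k.+1) < lagrangian R G ->
  optimal_weight G x ->
  forall v : 'I_n, link_clique_num_le G v k -> x v < (k.+1)%:R^-1.
Proof.
move=> k0 G3 hlt [xs xopt] v hv.
rewrite ltNge; apply/negP => hxv.
have x01 := xs.1; have xsum := xs.2.
have x0 i : 0 <= x i by have /andP[] := x01 i.
set s := x v.
have s1 : s <= 1 by have /andP[] := x01 v.
have kR1 : 1 <= k%:R :> R by rewrite ler1n.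
have kS : (k.+1)%:R = k%:R + 1 :> R by rewrite -natr1.
have s0 : 0 < s by apply: lt_le_trans hxv; rewrite invr_gt0 kS; lra.
have hs : (k%:R + 1) * (1 - s) <= k%:R.
  have : (k%:R + 1) * (k.+1)%:R^-1 <= (k%:R + 1) * s by apply: ler_wpM2l => //; lra.
  rewrite -kS mulfV ?pnatr_eq0 // kS => h; lra.
have hK : k%:R * (k%:R - 1) <= lagrangian R (complete3 k.+1) * 6 * (k%:R + 1)^+2.
  set c := (k.+1)%:R^-1 : R.
  have c0 : 0 < c by rewrite invr_gt0 kS; lra.
  have us : in_simplex (fun _ : 'I_k.+1 => c).
    split; last by rewrite sumr_const card_ord -mulr_natr /c mulVf // pnatr_eq0.
    move=> i; apply/andP; split; first lra.
    by rewrite /c invf_le1 ?ltr0Sn // ler1n.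
  have := @lagr_le R k.+1 (complete3 k.+1) _ us.
  rewrite /lagr_at.
  rewrite (eq_bigr (fun _ => c^+3)); last first.
    by move=> e; rewrite inE => /eqP h3; rewrite prodr_const h3.
  rewrite sumr_const /complete3 card_draws card_ord => hl.
  have hb : ('C(k.+1, 3))%:R * 6 = (k.+1)%:R * k%:R * (k%:R - 1) :> R.
    by apply: binom3R.
  have e1 : c * (k%:R + 1) = 1 by rewrite /c -kS mulVf // pnatr_eq0.
  have E : k%:R * (k%:R - 1) = c ^+ 3 *+ 'C(k.+1, 3) * 6 * (k%:R + 1)^+2.
    rewrite -[c ^+ 3 *+ _]mulr_natr.
    have -> : c ^+ 3 * ('C(k.+1, 3))%:R * 6 * (k%:R + 1)^+2 =
      c ^+ 3 * (('C(k.+1, 3))%:R * 6) * (k%:R + 1)^+2 by ring.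
    rewrite hb kS.
    have -> : c^+3 * ((k%:R + 1) * k%:R * (k%:R - 1)) * (k%:R + 1)^+2
      = (c * (k%:R + 1))^+3 * (k%:R * (k%:R - 1)) by ring.
    by rewrite e1 expr1n mul1r.
  rewrite E; apply: ler_wpM2r; first by apply: sqr_ge0.
  by apply: ler_wpM2r.
have xsr : \sum_(i | i != v) x i = 1 - s.
  by move: xsum; rewrite (bigD1 v) //= -/s => <-; rewrite addrC addrK.
set L := Lv G v x.
set M := Mv G v x.
have lamG : lagrangian R G = s * L + M by rewrite -xopt /lagr_at (lagr_split G v).
have L0 : 0 <= L by apply: sumr_ge0 => e _; apply: prodr_ge0 => i _.
have hder : 2 * L + 3 * (M - (1 - s) * L) <= 0.
  rewrite leNgt; apply/negP => hD.
  have [eps [e0 es hpos]] := @deriv_arith _ _ _ _ L0 hD s0 s1.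
  set r := 1 + eps.
  pose z := fun i => if i == v then 1 - r * (1 - s) else r * x i.
  have zr : forall i, i != v -> z i = r * x i by move=> i /negbTE h; rewrite /z h.
  have zv : z v = 1 - r * (1 - s) by rewrite /z eqxx.
  have hr1 : r * (1 - s) <= 1.
    have : 0 <= eps * s by apply: mulr_ge0; lra.
    rewrite /r; lra.
  have z0 : forall i, 0 <= z i.
    move=> i; case: (boolP (i == v)) => [/eqP -> | iv]; first by rewrite zv; lra.
    by rewrite zr //; apply: mulr_ge0 => //; rewrite /r; lra.
  have zsum : \sum_i z i = 1.
    rewrite (bigD1 v) //= zv (eq_bigr (fun i => r * x i)) ?zr // -mulr_sumr xsr.
    by rewrite addrNK.
  have zs : in_simplex z.
    split => // i; apply/andP; split => //.
    by rewrite -zsum (bigD1 i) //= lerDl; apply: sumr_ge0.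
  have := @lagr_le _ _ G _ zs.
  rewrite -xopt /lagr_at !(lagr_split G v) zv (Lv_scale G3 zr) (Mv_scale G3 zr) -/L -/M.
  have E : (1 - r * (1 - s)) * (r ^+ 2 * L) + r ^+ 3 * M - (s * L + M) =
    eps * (2 * L + 3 * (M - (1 - s) * L)) + eps ^+ 2 * (L + 3 * (M - (1 - s) * L))
     + eps ^+ 3 * (M - (1 - s) * L) by rewrite /r; ring.
  rewrite -/s => h; lra.
have hMS : L * 2 * k%:R <= (k%:R - 1) * (1 - s) ^+ 2.
  pose y := fun i => if i == v then 0 else x i.
  have y0 : forall i, 0 <= y i by move=> i; rewrite /y; case: ifP.
  have irr : irreflexive (adjv G v) by move=> a; rewrite /adjv eqxx.
  have sym : symmetric (adjv G v).
    move=> a b; rewrite /adjv eq_sym; congr (_ && (_ \in G)); congr (v |: _).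
    exact: finset.setUC.
  have cl : forall S : {set 'I_n}, (forall a b, a \in S -> b \in S -> a != b -> adjv G v a b) ->
     (#|S| <= k)%N.
    by move=> S hS; apply: hv => a b ha hb nab; have /andP[] := hS a b ha hb nab.
  have := MS k0 irr sym cl _ y0.
  rewrite conv // (Lv_scale (r := 1) (x := x) G3); last first.
    by move=> i /negbTE h; rewrite /y h mul1r.
  have -> : \sum_i y i = 1 - s.
    by rewrite (bigD1 v) //= {1}/y eqxx add0r -xsr; apply: eq_bigr => i /negbTE h; rewrite /y h.
  by rewrite expr1n mul1r -/L -mulr_natr.
apply: (@final_arith _ _ _ _ _ _ kR1 L0 hder hMS hs _ hK); first lra.
by rewrite -lamG.
Qed.
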